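(* Let $k,n$ be positive integers. A graph $G$ with $n$ vertices satisfies $\kappa'(G)=\tau(G)=k$ if and only if $G$ has an edge-cut of size $k$ and a spanning subgraph belonging to $\mathcal{F}_{k,n}$.
   Context: Graphs are finite, loopless, possibly with multiple edges. $\kappa'(G)$ is the edge connectivity; $\tau(G)$ is the maximum number of edge-disjoint spanning trees of a connected graph $G$. An edge-cut is a minimal set of edges whose removal increases the number of components. For $n>1$, $\mathcal{F}_{k,n}$ is the set of graphs $G$ on $n$ vertices with $\kappa'(G)=\tau(G)=k$ whose number of edges is minimum among all graphs on $n$ vertices with $\kappa'=\tau=k$. *)

(* Defs.v *)
From mathcomp Require Import all_boot.
Set Implicit Arguments. Unset Strict Implicit. Unset Printing Implicit Defensive.

(* A finite loopless multigraph on the vertex set 'I_n is given by its list of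
   edges; edge number i (i : 'I_(size g)) joins the two vertices of the pair
   tnth (in_tuple g) i.  Parallel edges are allowed (repeated pairs). *)
Definition mgraph (n : nat) := seq ('I_n * 'I_n).

Definition loopless n (g : mgraph n) : bool := all (fun e => e.1 != e.2) g.

Definition edge n (g : mgraph n) := 'I_(size g).

Definition ends n (g : mgraph n) (i : edge g) : 'I_n * 'I_n := tnth (in_tuple g) i.

Definition adj n (g : mgraph n) (A : {set edge g}) : rel 'I_n :=
  fun u v => [exists i in A, (ends i == (u, v)) || (ends i == (v, u))].

Definition conn n (g : mgraph n) (A : {set edge g}) : Prop :=
  forall u v : 'I_n, connect (adj A) u v.

Definition ncomp n (g : mgraph n) (A : {set edge g}) : nat :=
  n_comp (adj A) predT.

Definition spanning_tree n (g : mgraph n) (T : {set edge g}) : Prop :=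
  conn T /\ forall e, e \in T -> ~ conn (T :\ e).

Definition edge_cut n (g : mgraph n) (C : {set edge g}) : Prop :=
  ncomp [set: edge g] < ncomp (~: C) /\
  forall C' : {set edge g}, C' \proper C -> ncomp (~: C') <= ncomp [set: edge g].

Definition kappa_eq n (g : mgraph n) (k : nat) : Prop :=
  (exists A : {set edge g}, ~ conn (~: A) /\ #|A| = k) /\
  (forall A : {set edge g}, ~ conn (~: A) -> k <= #|A|).

Definition has_disjoint_trees n (g : mgraph n) (m : nat) : Prop :=
  exists F : 'I_m -> {set edge g},
    (forall i, spanning_tree (F i)) /\
    (forall i j, i != j -> [disjoint F i & F j]).

Definition tau_eq n (g : mgraph n) (k : nat) : Prop :=
  conn [set: edge g] /\ has_disjoint_trees g k /\ ~ has_disjoint_trees g k.+1.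

Definition kt_eq n (g : mgraph n) (k : nat) : Prop := kappa_eq g k /\ tau_eq g k.

Definition inF (k n : nat) (g : mgraph n) : Prop :=
  1 < n /\ loopless g /\ kt_eq g k /\
  forall g' : mgraph n, loopless g' -> kt_eq g' k -> size g <= size g'.

Definition subgraph n (g : mgraph n) (A : {set edge g}) : mgraph n :=
  mask [seq i \in A | i <- enum 'I_(size g)] g.
Arguments inF k n g : clear implicits.

(* Main.v *)
Require Import Defs.
From mathcomp Require Import all_boot.
From Stdlib Require Import Classical ClassicalEpsilon.
Set Implicit Arguments. Unset Strict Implicit. Unset Printing Implicit Defensive.

Section Basic.
Variables (n : nat) (g : mgraph n).

Lemma adj_sym (A : {set edge g}) : symmetric (adj A).
Proof.
move=> u v; apply/existsP/existsP => -[i /andP[iA h]]; exists i;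
  by rewrite iA orbC.
Qed.

Lemma connect_symA (A : {set edge g}) : connect_sym (adj A).
Proof. exact/sym_connect_sym/adj_sym. Qed.

Lemma adj_sub (A B : {set edge g}) : A \subset B -> subrel (adj A) (adj B).
Proof.
move=> sAB u v /existsP[i /andP[iA h]]; apply/existsP; exists i.
by rewrite (subsetP sAB _ iA).
Qed.

Lemma connect_subS (A B : {set edge g}) : A \subset B ->
  subrel (connect (adj A)) (connect (adj B)).
Proof. move=> sAB; apply: connect_sub => u v h; exact/connect1/(adj_sub sAB). Qed.

Lemma conn_sub (A B : {set edge g}) : A \subset B -> conn A -> conn B.
Proof. by move=> sAB cA u v; apply: (connect_subS sAB). Qed.

Lemma conn_root (A : {set edge g}) r : (forall v, connect (adj A) r v) -> conn A.
Proof.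
move=> h u v; apply: (connect_trans _ (h v)).
by rewrite connect_symA.
Qed.

Lemma ncomp_conn (A : {set edge g}) (r : 'I_n) : conn A -> ncomp A = 1.
Proof.
move=> cA; rewrite /ncomp /n_comp_mem.
rewrite -(card1 (root (adj A) r)); apply: eq_card => x; rewrite !inE /=.
rewrite andbT; apply/idP/eqP => [/eqP rx | ->].
  by rewrite -rx; apply/(rootP (connect_symA A)); apply: cA.
exact: roots_root (connect_symA A) r.
Qed.

Lemma ncomp_nconn (A : {set edge g}) : ~ conn A -> 1 < ncomp A.
Proof.
move=> ncA.
have [u [v nuv]] : exists u v, ~ connect (adj A) u v.
  apply: NNPP => h; apply: ncA => u v; apply: NNPP => h'; apply: h; by exists u, v.
have -> : ncomp A = #|[pred x | roots (adj A) x]|.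
  by apply: eq_card => x; rewrite !inE /= andbT.
have ne : root (adj A) u != root (adj A) v.
  by apply/negP => /eqP/(rootP (connect_symA A)).
apply: (@leq_trans #|[set root (adj A) u; root (adj A) v]|); first by rewrite cards2 ne.
apply: subset_leq_card.
apply/subsetP => x; rewrite !inE => /orP[] /eqP ->;
  exact: roots_root (connect_symA A) _.
Qed.

Lemma cross (e : rel 'I_n) (X : {set 'I_n}) x p : path e x p -> x \in X ->
  last x p \notin X -> exists u v, [/\ u \in X, v \notin X & e u v].
Proof.
elim: p x => [|y p IH] x /=; first by move=> _ ->.
case/andP=> exy py xX ly; case: (boolP (y \in X)) => yX.
  exact: IH py yX ly.
by exists x, y.
Qed.

Lemma grow (A : {set edge g}) r : conn A -> forall m, m < n ->
  exists X : {set 'I_n}, exists S : {set edge g},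
   [/\ r \in X, #|X| = m.+1, S \subset A, #|S| = m &
       (forall x, x \in X -> connect (adj S) r x) /\
       (forall i, i \in S -> (ends i).1 \in X /\ (ends i).2 \in X)].
Proof.
move=> cA; elim=> [|m IH] ltmn.
  exists [set r], set0; split; rewrite ?cards1 ?cards0 ?sub0set ?inE //.
  split; first by move=> x /set1P ->.
  by move=> i; rewrite inE.
have [X [S [rX cX sSA cS [conS endS]]]] := IH (ltnW ltmn).
have [v0 v0X] : exists v0, v0 \notin X.
  apply: NNPP => h.
  have XT : X = setT.
    apply/setP => x; rewrite inE; apply: NNPP => /negP hx; apply: h; by exists x.
  by move: ltmn; rewrite -cX XT cardsT card_ord ltnn.
have /connectP[p pp lp] := cA r v0.
have := cross pp rX; rewrite -lp => /(_ v0X) [u [v [uX vX /existsP[i /andP[iA hi]]]]].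
have iS : i \notin S.
  apply/negP => /endS [h1 h2].
  by case/orP: hi => /eqP ei; move: h1 h2; rewrite ei /= => h1 h2;
    [move: h2 | move: h1]; rewrite (negbTE vX).
exists (v |: X), (i |: S); split.
- by rewrite inE rX orbT.
- by rewrite cardsU1 vX cX.
- by rewrite subUset sub1set iA sSA.
- by rewrite cardsU1 iS cS.
split.
- have sub : S \subset i |: S by apply: subsetUr.
  move=> x; rewrite !inE => /orP[/eqP -> |xX]; last exact: (connect_subS sub (conS x xX)).
  apply: (connect_trans (connect_subS sub (conS u uX))); apply: connect1.
  by apply/existsP; exists i; rewrite !inE eqxx /=; case/orP: hi => -> ; rewrite ?orbT.
- move=> j; rewrite !inE => /orP[/eqP -> | /endS[h1 h2]]; last by rewrite h1 h2 !orbT.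
  by case/orP: hi => /eqP -> /=; rewrite eqxx uX ?orbT.
Qed.

Lemma span_small (A : {set edge g}) : conn A ->
  exists S : {set edge g}, [/\ S \subset A, conn S & #|S| = n.-1].
Proof.
move=> cA; case: (posnP n) => [n0|npos].
  exists set0; split; rewrite ?sub0set ?cards0 ?n0 //.
  by move=> u; have := ltn_ord u; rewrite {2}n0.
pose r := Ordinal npos.
have lt : n.-1 < n by rewrite prednK.
have [X [S [rX cX sSA cS [conS _]]]] := @grow A r cA n.-1 lt.
have XT : X = setT.
  apply/eqP; rewrite eqEcard subsetT cardsT card_ord cX /=; rewrite (prednK npos); exact: leqnn.
exists S; split=> //; apply: (@conn_root S r) => v; apply: conS.
by rewrite XT inE.
Qed.

Lemma conn_card (A : {set edge g}) : conn A -> n.-1 <= #|A|.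
Proof.
by move=> /span_small [S [sSA _ <-]]; apply: subset_leq_card.
Qed.

Lemma tree_in (A : {set edge g}) : conn A ->
  exists T : {set edge g}, T \subset A /\ spanning_tree T.
Proof.
move: {2}#|A| (leqnn #|A|) => k; elim: k A => [|k IH] A lek cA.
  exists A; split=> // ; split=> // e eA.
  by move: lek; rewrite (cardsD1 e A) eA.
case: (classic (exists e, e \in A /\ conn (A :\ e))) => [[e [eA ce]]|h].
  have [|T [sT tT]] := IH (A :\ e) _ ce.
    by move: lek; rewrite (cardsD1 e A) eA.
  exists T; split=> //; apply: (subset_trans sT); exact: subD1set.
exists A; split=> //; split=> // e eA ce; apply: h; by exists e.
Qed.

Lemma tree_small (A : {set edge g}) : conn A ->
  exists T : {set edge g}, [/\ T \subset A, spanning_tree T & #|T| <= n.-1].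
Proof.
move=> /span_small [S [sSA cS cardS]].
have [T [sTS tT]] := tree_in cS.
exists T; split=> //; first exact: subset_trans sSA.
by rewrite -cardS; apply: subset_leq_card.
Qed.

Lemma trees_cut m (D : {set edge g}) :
  has_disjoint_trees g m -> ~ conn (~: D) -> m <= #|D|.
Proof.
move=> [F [tF dF]] ncD.
have pick i : exists x, x \in F i :&: D.
  apply: NNPP => h; apply: ncD; apply: (conn_sub _ (tF i).1).
  apply/subsetP => x xF; rewrite inE; apply/negP => xD; apply: h.
  by exists x; rewrite inE xF.
have [f hf] : exists f : 'I_m -> edge g, forall i, f i \in F i :&: D.
  exists (fun i => xchoose (pick i)) => i; exact: xchooseP.
have finj : injective f.
  move=> i j eij; apply/eqP; apply: contraT => nij.
  have := dF i j nij; rewrite -setI_eq0 => /eqP /setP /(_ (f i)).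
  rewrite inE; move: (hf i) (hf j); rewrite !inE eij => /andP[-> _] /andP[-> _] //.
rewrite -[m]card_ord -(card_imset _ finj).
by apply: subset_leq_card; apply/subsetP => x /imsetP[i _ ->]; move: (hf i); rewrite inE => /andP[].
Qed.

End Basic.

Section Union.
Variables (I T : finType) (F : I -> {set T}).

Definition Un (r : seq I) : {set T} := [set x | has (fun i => x \in F i) r].

Lemma Un_cons i r : Un (i :: r) = F i :|: Un r.
Proof. by apply/setP => x; rewrite !inE. Qed.

Lemma Un_le r c : (forall i, #|F i| <= c) -> #|Un r| <= size r * c.
Proof.
move=> hc; elim: r => [|i r IH].
  by rewrite (_ : Un [::] = set0) ?cards0 //; apply/setP => x; rewrite !inE.
rewrite Un_cons /= mulSn; apply: leq_trans (leq_card_setU _ _) _.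
exact: leq_add.
Qed.

Lemma Un_ge r c : uniq r -> (forall i j, i != j -> [disjoint F i & F j]) ->
  (forall i, c <= #|F i|) -> size r * c <= #|Un r|.
Proof.
move=> + dF hc; elim: r => [|i r IH] //= /andP[ir ur].
rewrite Un_cons mulSn.
have dj : [disjoint F i & Un r].
  rewrite -setI_eq0; apply/eqP/setP => x; rewrite !inE.
  apply/negP => /andP[xi /hasP[j jr xj]].
  have nij : i != j by apply: contraNneq ir => ->.
  have := dF i j nij; rewrite -setI_eq0 => /eqP/setP/(_ x); rewrite !inE xi xj.
  by [].
have -> : #|F i :|: Un r| = #|F i| + #|Un r|.
  by apply/eqP; rewrite (leq_card_setU (F i) (Un r)).2 dj.
exact: leq_add (hc i) (IH ur).
Qed.

End Union.

Lemma trees_size n (g : mgraph n) m : has_disjoint_trees g m -> m * n.-1 <= size g.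
Proof.
move=> [F [tF dF]].
have := @Un_ge _ _ F (enum 'I_m) n.-1 (enum_uniq _) dF (fun i => conn_card (tF i).1).
rewrite size_enum_ord => h; apply: leq_trans h _.
by rewrite -[X in _ <= X]card_ord; apply: max_card.
Qed.

Section Transfer.
Variables (n : nat) (g1 g2 : mgraph n) (phi : edge g1 -> edge g2).
Hypotheses (phi_inj : injective phi) (phi_ends : forall i, ends (phi i) = ends i).

Lemma adj_phi (B : {set edge g1}) : adj (phi @: B) =2 adj B.
Proof.
move=> u v; apply/existsP/existsP => [[j /andP[/imsetP[i iB ->] h]]| [i /andP[iB h]]].
  by exists i; rewrite iB -!phi_ends.
by exists (phi i); rewrite imset_f // phi_ends.
Qed.

Lemma conn_phi (B : {set edge g1}) : conn (phi @: B) <-> conn B.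
Proof.
by split=> h u v; move: (h u v); rewrite (eq_connect (adj_phi B)).
Qed.

Lemma imD1_phi (B : {set edge g1}) i : phi @: (B :\ i) = phi @: B :\ phi i.
Proof.
apply/setP => x; rewrite !inE; apply/imsetP/andP => [[j /setD1P[ji jB] ->]|[xi /imsetP[j jB xj]]].
  by rewrite (inj_eq phi_inj) ji imset_f.
by exists j; rewrite // !inE jB andbT; apply: contraNneq xi => <-; rewrite xj.
Qed.

Lemma tree_phi (B : {set edge g1}) : spanning_tree (phi @: B) <-> spanning_tree B.
Proof.
split=> [[c m]|[c m]]; split.
- exact/conn_phi.
- move=> e eB ce; apply: (m (phi e)); first exact: imset_f.
  by rewrite -imD1_phi; apply/conn_phi.
- exact/conn_phi.
- move=> e /imsetP[i iB ->]; rewrite -imD1_phi => /conn_phi; exact: m.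
Qed.

Lemma trees_phi m : has_disjoint_trees g1 m -> has_disjoint_trees g2 m.
Proof.
move=> [F [tF dF]]; exists (fun i => phi @: F i); split.
  by move=> i; apply/tree_phi.
move=> i j nij; rewrite -setI_eq0; apply/eqP/setP => x; rewrite !inE.
apply/negP => /andP[/imsetP[a aF ->] /imsetP[b bF /phi_inj eab]].
have := dF i j nij; rewrite -setI_eq0 => /eqP/setP/(_ a); rewrite !inE aF eab bF.
by [].
Qed.

Lemma preim_phi (X : {set edge g2}) : (forall x, x \in X -> exists i, phi i = x) ->
  phi @: (phi @^-1: X) = X.
Proof.
move=> hX; apply/setP => x; apply/imsetP/idP => [[i] | xX].
  by rewrite inE => ? ->.
by have [i ei] := hX x xX; exists i; rewrite // inE ei.
Qed.

End Transfer.

Section Sub.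
Variables (n : nat) (g : mgraph n) (A : {set edge g}).

Definition ss := [seq i <- enum 'I_(size g) | i \in A].

Lemma subgraphE : subgraph A = map (tnth (in_tuple g)) ss.
Proof.
rewrite /subgraph /ss filter_mask map_mask.
by rewrite [in RHS](map_tnth_enum (in_tuple g)).
Qed.

Lemma size_sub : size (subgraph A) = size ss.
Proof. by rewrite subgraphE size_map. Qed.

Definition sphi (j : edge (subgraph A)) : edge g := tnth (in_tuple ss) (cast_ord size_sub j).

Lemma sphi_nth (j : edge (subgraph A)) x0 : sphi j = nth x0 ss j.
Proof. by rewrite /sphi (tnth_nth x0). Qed.

Lemma sphi_ends j : ends (sphi j) = ends j.
Proof.
have h k x0 y0 : k < size ss -> nth x0 (subgraph A) k = tnth (in_tuple g) (nth y0 ss k).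
  by move=> lk; rewrite subgraphE (nth_map y0).
rewrite /ends [RHS](tnth_nth (ends (sphi j))) (h _ _ (sphi j)) /=; last by rewrite -size_sub.
by rewrite -(sphi_nth j (sphi j)).
Qed.

Lemma uniq_ss : uniq ss.
Proof. exact/filter_uniq/enum_uniq. Qed.

Lemma sphi_inj : injective sphi.
Proof.
move=> j1 j2; rewrite (sphi_nth j1 (sphi j1)) (sphi_nth j2 (sphi j1)) => e.
apply/val_inj/eqP; rewrite -(nth_uniq (sphi j1) _ _ uniq_ss) ?e // -size_sub; exact: ltn_ord.
Qed.

Lemma sphi_in j : sphi j \in A.
Proof.
have : sphi j \in ss by rewrite /sphi mem_tnth.
by rewrite mem_filter => /andP[].
Qed.

Lemma sphi_onto x : x \in A -> exists j, sphi j = x.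
Proof.
move=> xA; have xs : x \in ss by rewrite mem_filter xA mem_enum.
have lk : index x ss < size (subgraph A) by rewrite size_sub index_mem.
exists (Ordinal lk); rewrite (sphi_nth _ x) /=; exact: nth_index.
Qed.

Lemma sub_loopless : loopless g -> loopless (subgraph A).
Proof.
move=> hg; rewrite /loopless subgraphE all_map; apply/allP => i _ /=.
by apply: (allP hg); apply: mem_tnth.
Qed.

Lemma size_subgraph : size (subgraph A) = #|A|.
Proof.
rewrite -[LHS]card_ord -cardsT -(card_imset _ sphi_inj).
suff -> : sphi @: [set: edge (subgraph A)] = A by [].
apply/setP => x; apply/imsetP/idP => [[j _ ->]|xA]; first exact: sphi_in.
by have [j <-] := sphi_onto xA; exists j.
Qed.

End Sub.

Theorem theorem4p4 (k n : nat) (hk : 0 < k) (hn : 0 < n)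
    (g : mgraph n) (hg : loopless g) :
  kt_eq g k <->
  ((exists C : {set edge g}, edge_cut C /\ #|C| = k) /\
   (exists A : {set edge g}, inF k n (subgraph A))).
Proof.
pose r := Ordinal hn.
split.
- move=> [[[D0 [ncD0 cD0]] kall] [cT [[F [tF dF]] nk1]]].
  have n1 : 1 < n.
    case: (ltnP 1 n) => // hn1; exfalso; apply: ncD0 => u v.
    have -> // : u = v.
    have hw (w : 'I_n) : nat_of_ord w = 0.
      by apply/eqP; rewrite -leqn0 -ltnS; exact: leq_trans (ltn_ord w) hn1.
    by apply/val_inj; rewrite /= hw hw.
  split.
    exists D0; split=> //; split.
      by rewrite (ncomp_conn r cT); apply: ncomp_nconn.
    move=> C' pC'; rewrite (ncomp_conn r cT) (@ncomp_conn _ _ _ r) //.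
    apply: NNPP => h; have := kall _ h; have := proper_card pC'.
    by rewrite cD0 => /leq_trans h1 /h1; rewrite ltnn.
  have tF' i : exists T : {set edge g}, [/\ T \subset F i, spanning_tree T & #|T| <= n.-1].
    exact: tree_small (tF i).1.
  pose F' i := proj1_sig (constructive_indefinite_description _ (tF' i)).
  have hF' i : [/\ F' i \subset F i, spanning_tree (F' i) & #|F' i| <= n.-1].
    exact: proj2_sig (constructive_indefinite_description _ (tF' i)).
  have dF' i j : i != j -> [disjoint F' i & F' j].
    move=> nij; have [s1 _ _] := hF' i; have [s2 _ _] := hF' j.
    rewrite -setI_eq0; apply/eqP/setP => x; rewrite !inE.
    apply/negP => /andP[x1 x2].
    have := dF i j nij; rewrite -setI_eq0 => /eqP/setP/(_ x).
    by rewrite !inE (subsetP s1 _ x1) (subsetP s2 _ x2).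
  pose U := Un F' (enum 'I_k).
  have cU : #|U| <= k * n.-1.
    have := @Un_le _ _ F' (enum 'I_k) n.-1 (fun i => let: And3 _ _ h := hF' i in h).
    by rewrite size_enum_ord.
  have FU i : F' i \subset U.
    apply/subsetP => x xi; rewrite inE; apply/hasP; exists i => //; exact: mem_enum.
  pose phi := @sphi n g U.
  have phi_inj : injective phi := @sphi_inj n g U.
  have phi_ends : forall i, ends (phi i) = ends i := @sphi_ends n g U.
  pose F'' i := phi @^-1: F' i.
  have imF'' i : phi @: F'' i = F' i.
    apply: preim_phi => x xF; apply: sphi_onto; exact: (subsetP (FU i)).
  have trH : has_disjoint_trees (subgraph U) k.
    exists F''; split.
      by move=> i; apply/(tree_phi phi_inj phi_ends); rewrite imF''; case: (hF' i).
    move=> i j nij; rewrite -setI_eq0; apply/eqP/setP => x; rewrite !inE.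
    apply/negP => /andP[x1 x2].
    have := dF' i j nij; rewrite -setI_eq0 => /eqP/setP/(_ (phi x)).
    by rewrite !inE x1 x2.
  have szH : size (subgraph U) = #|U| := size_subgraph U.
  exists U; split=> //; split; first exact: sub_loopless.
  split; last first.
    move=> g' _ [_ [_ [trg' _]]]; rewrite szH; apply: leq_trans cU _.
    exact: trees_size trg'.
  have ncH : ~ conn (~: (phi @^-1: D0)).
    move=> /(conn_phi phi_ends) c; apply: ncD0; apply: conn_sub c.
    apply/subsetP => x /imsetP[i]; rewrite !inE => hi ->; exact: hi.
  split; last first.
    split; last split => //.
      pose i0 := Ordinal hk.
      have [FF [tt _]] := trH; apply: (conn_sub (subsetT _)).
      exact: (tt i0).1.
    move=> /trees_size; rewrite szH => h.
    have := leq_trans h cU; rewrite leq_pmul2r ?ltnn //.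
    by rewrite -ltnS prednK // ltnW.
  split; last by move=> A' hA'; exact: trees_cut trH hA'.
  exists (phi @^-1: D0); split=> //; apply/eqP; rewrite eqn_leq; apply/andP; split.
    rewrite -cD0 -(card_imset _ phi_inj); apply: subset_leq_card.
    by apply/subsetP => x /imsetP[i]; rewrite inE => hi ->.
  exact: trees_cut trH ncH.
- move=> [[C [[lt _] cC]] [A [n1 [_ [[[_ _] [cH [trH _]]] _]]]]].
  have phi_inj := @sphi_inj n g A.
  have phi_ends := @sphi_ends n g A.
  have cT : conn [set: edge g].
    apply: (conn_sub (subsetT _)); apply/(conn_phi phi_ends); exact: cH.
  have trG := trees_phi phi_inj phi_ends trH.
  have ncC : ~ conn (~: C).
    by move=> c; move: lt; rewrite (ncomp_conn r cT) (ncomp_conn r c) ltnn.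
  split; split.
  + by exists C.
  + by move=> A' hA'; exact: trees_cut trG hA'.
  + exact: cT.
  + split=> // h.
    by have := trees_cut h ncC; rewrite cC ltnn.
Qed.
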